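(* Let $k > k' > 0$. There exists a $k$-local function $f:\{0,1\}^n\to\mathbb{R}$ with $\max_{x\in\{0,1\}^n}|f(x)| \le 1$ such that for every $k'$-local function $g:\{0,1\}^n\to\mathbb{R}$, $$\max_{x\in\{0,1\}^n}|f(x) - g(x)| \ge 2^{-k'}.$$
   Context: A function $f:\{0,1\}^n\to\mathbb{R}$ is $k$-local if it can be written as a sum $f = \sum_i f_i$ of functions $f_i:\{0,1\}^n\to\mathbb{R}$ each depending on at most $k$ of its inputs. *)

(* Defs.v *)
From HB Require Import structures.
From mathcomp Require Import all_boot all_order all_algebra.
From mathcomp Require Import reals.
Set Implicit Arguments. Unset Strict Implicit. Unset Printing Implicit Defensive.
Import Order.TTheory GRing.Theory Num.Theory.
Local Open Scope ring_scope.

Definition cube (n : nat) := {ffun 'I_n -> bool}.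

Definition depends_only_on (R : realType) (n : nat) (h : cube n -> R)
  (S : {set 'I_n}) : Prop :=
  forall x y : cube n, (forall i, i \in S -> x i = y i) -> h x = h y.

Definition depends_on_at_most (R : realType) (n k : nat) (h : cube n -> R) : Prop :=
  exists S : {set 'I_n}, (#|S| <= k)%N /\ depends_only_on h S.

Definition k_local (R : realType) (n k : nat) (f : cube n -> R) : Prop :=
  exists (m : nat) (fs : 'I_m -> cube n -> R),
    (forall i, depends_on_at_most k (fs i)) /\
    forall x, f x = \sum_(i < m) fs i x.

(* Main.v *)
Require Import Defs.
From HB Require Import structures.
From mathcomp Require Import all_boot all_order all_algebra.
From mathcomp Require Import reals.
Import Order.TTheory GRing.Theory Num.Theory.
Local Open Scope ring_scope.

Section Aux.
Variables (R : realType) (n : nat).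

Definition chi (T : {set 'I_n}) (x : cube n) : R :=
  \prod_(i in T) (if x i then -1 else 1).

Definition flip (j : 'I_n) (x : cube n) : cube n :=
  [ffun i => if i == j then ~~ x i else x i].

Lemma flipK (j : 'I_n) : involutive (flip j).
Proof.
move=> x; apply/ffunP=> i; rewrite !ffunE; case: eqP => // _.
by rewrite negbK.
Qed.

Lemma chi_sq (T : {set 'I_n}) (x : cube n) : chi T x * chi T x = 1.
Proof.
rewrite /chi -big_split /=; apply: big1 => i _.
by case: (x i); rewrite ?mulrNN mulr1.
Qed.

Lemma chi_flip (T : {set 'I_n}) (j : 'I_n) (x : cube n) : j \in T -> chi T (flip j x) = - chi T x.
Proof.
move=> jT; rewrite /chi (bigD1 j jT) [in RHS](bigD1 j jT) /=.
rewrite ffunE eqxx.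
have -> : \prod_(i in T | i != j) (if flip j x i then -1 else 1 : R)
        = \prod_(i in T | i != j) (if x i then -1 else 1).
  by apply: eq_bigr => i /andP [_ /negbTE ij]; rewrite ffunE ij.
by case: (x j); rewrite /= ?mulNr ?opprK ?mul1r.
Qed.

Lemma sum_chi_h (T S : {set 'I_n}) (h : cube n -> R) :
  depends_only_on h S -> (#|S| < #|T|)%N -> \sum_x chi T x * h x = 0.
Proof.
move=> dh lt.
have : ~~ (T \subset S).
  by apply/negP => /subset_leq_card; rewrite leqNgt lt.
case/subsetPn => j jT jS.
set s := \sum_x chi T x * h x.
have : s = - s.
  rewrite {1}/s (reindex_inj (inv_inj (flipK j))) /= /s -sumrN.
  apply: eq_bigr => x _; rewrite chi_flip // mulNr; congr (- (_ * _)).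
  apply: dh => i iS; rewrite ffunE; case: eqP => // ij.
  by move: jS; rewrite -ij iS.
move/eqP; rewrite -subr_eq0 opprK -mulr2n mulrn_eq0 /= => /eqP.
done.
Qed.

End Aux.

Theorem lemma12 (R : realType) (n k k' : nat) :
  (0 < k')%N -> (k' < k)%N -> (k <= n)%N ->
  exists f : cube n -> R,
    k_local k f /\
    (forall x, `|f x| <= 1) /\
    (forall g : cube n -> R, k_local k' g ->
       exists x, (2 ^- k' : R) <= `|f x - g x|).
Proof.
move=> k'0 kk kn.
pose T : {set 'I_n} := [set widen_ord kn i | i : 'I_k].
have cT : #|T| = k.
  by rewrite card_imset ?card_ord // => a b /(congr1 val) /= /val_inj.
exists (chi R n T); split; last split.
- exists 1%N, (fun _ => chi R n T); split; last by move=> x; rewrite big_ord1.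
  move=> _; exists T; split; first by rewrite cT.
  move=> x y e; apply: eq_bigr => i iT; by rewrite e.
- move=> x; rewrite /chi normr_prod big1 // => i _.
  by case: (x i); rewrite ?normrN normr1.
- move=> g [m [fs [dfs eg]]].
  have sg : \sum_x chi R n T x * g x = 0.
    under eq_bigr => x _ do rewrite eg mulr_sumr.
    rewrite exchange_big /=; apply: big1 => i _.
    case: (dfs i) => S [cS dS];
    apply: (@sum_chi_h R n T S (fs i) dS).
    by rewrite cT (leq_ltn_trans cS kk).
  have : [exists x, 1 <= chi R n T x * (chi R n T x - g x)].
    rewrite -[X in is_true X]negbK negb_exists; apply/negP => /forallP H.
    have : \sum_x chi R n T x * (chi R n T x - g x) < \sum_(x : cube n) 1.
      apply: ltr_sum; first by apply/hasP; exists [ffun => false]; rewrite ?mem_index_enum.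
      by move=> x _; move: (H x); rewrite leNgt negbK.
    rewrite lt_def; case/andP=> /eqP ne _; apply: ne; symmetry.
    under eq_bigr => x _ do rewrite mulrBr chi_sq.
    by rewrite sumrB sg subr0.
  case/existsP=> x hx; exists x.
  apply: (le_trans _ (le_trans hx _)).
    by rewrite invf_le1 ?exprn_ege1 ?exprn_gt0 // ler1n.
  rewrite (le_trans (ler_norm _)) // normrM.
  have -> : `|chi R n T x| = 1.
    by rewrite /chi normr_prod; apply: big1 => i _; case: (x i); rewrite ?normrN normr1.
  by rewrite mul1r.
Qed.
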